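(* Let $\beta>1$ and define $\psi_\beta:[0,1]\to[0,1]$ by $\psi_\beta(x)=\psi_1(x):=2^{\beta-1}x^\beta$ for $x\in[0,1/2]$ and $\psi_\beta(x)=\psi_2(x):=2^{\beta-1}(x-1/2)^\beta+1/2$ for $x\in[1/2,1]$. Let $a_0=b_0=1$ and for $k\ge1$ let $$a_k=\int_0^{1/2}\int_0^{\psi_1(x_1)}\cdots\int_0^{\psi_1(x_{k-1})}dx_k\cdots dx_1,\qquad b_k=\int_{1/2}^{1}\int_{1/2}^{\psi_2(x_1)}\cdots\int_{1/2}^{\psi_2(x_{k-1})}dx_k\cdots dx_1,$$ $$d_k=\int_0^{1}\int_0^{\psi_\beta(x_1)}\cdots\int_0^{\psi_\beta(x_{k-1})}dx_k\cdots dx_1 .$$ Then for $n=1,2,\dots$: (1) $d_n=\sum_{l=0}^n b_l\,a_{n-l}$; (2) $d_n<\dfrac{\beta^{(-n^2/2+n)/4}}{n!}$. *)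

(* Defs.v *)
From Stdlib Require Import Reals.
From Coquelicot Require Import Coquelicot.
Open Scope R_scope.

(* real power x^b for x >= 0, with the convention 0^b = 0 (b > 0). *)
Definition rpow (x b : R) : R := if Rle_dec x 0 then 0 else Rpower x b.

Definition psi1 (beta x : R) : R := Rpower 2 (beta - 1) * rpow x beta.
Definition psi2 (beta x : R) : R := Rpower 2 (beta - 1) * rpow (x - 1/2) beta + 1/2.
Definition psi_beta (beta x : R) : R :=
  if Rle_dec x (1/2) then psi1 beta x else psi2 beta x.

Fixpoint iter_in (psi : R -> R) (c : R) (j : nat) (x : R) : R :=
  match j with
  | O => 1
  | S j' => RInt (fun t => iter_in psi c j' t) c (psi x)
  end.

(* itint psi c e k = \int_c^e \int_c^{psi x1} ... \int_c^{psi x_{k-1}} dx_k ... dx_1,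
   and = 1 for k = 0. *)
Definition itint (psi : R -> R) (c e : R) (k : nat) : R :=
  match k with
  | O => 1
  | S k' => RInt (fun x => iter_in psi c k' x) c e
  end.

Definition a_seq (beta : R) (k : nat) : R := itint (psi1 beta) 0 (1/2) k.
Definition b_seq (beta : R) (k : nat) : R := itint (psi2 beta) (1/2) 1 k.
Definition d_seq (beta : R) (k : nat) : R := itint (psi_beta beta) 0 1 k.

(* Main.v *)
Require Import Defs.
From Stdlib Require Import Reals Lra Lia Psatz.
From Coquelicot Require Import Coquelicot.
Open Scope R_scope.

Lemma rpow_pos x b : 0 < x -> rpow x b = Rpower x b.
Proof. intros H; unfold rpow; destruct (Rle_dec x 0); [lra|auto]. Qed.
Lemma rpow_le0 x b : x <= 0 -> rpow x b = 0.
Proof. intros H; unfold rpow; destruct (Rle_dec x 0); [auto|lra]. Qed.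
Lemma Rpower_pos x b : 0 < Rpower x b.
Proof. unfold Rpower; apply exp_pos. Qed.
Lemma rpow_ge0 x b : 0 <= rpow x b.
Proof. unfold rpow; destruct (Rle_dec x 0); [lra|left; apply Rpower_pos]. Qed.
Lemma rpow_mult a b e : 0 <= a -> 0 <= b -> rpow (a*b) e = rpow a e * rpow b e.
Proof.
  intros Ha Hb. destruct Ha as [Ha|Ha]; [|subst; rewrite Rmult_0_l, !rpow_le0 by lra; ring].
  destruct Hb as [Hb|Hb]; [|subst; rewrite Rmult_0_r, !(rpow_le0 0) by lra; ring].
  rewrite !rpow_pos by (try apply Rmult_lt_0_compat; auto).
  symmetry; apply Rpower_mult_distr; auto.
Qed.
Lemma rpow_rpow x a c : 0 <= x -> rpow (rpow x a) c = rpow x (a*c).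
Proof.
  intros [H|H]; [|subst; rewrite (rpow_le0 0 a), (rpow_le0 0 c), (rpow_le0 0 (a*c)) by lra; reflexivity].
  rewrite (rpow_pos x a) by auto. rewrite !rpow_pos by (auto; apply Rpower_pos). apply Rpower_mult.
Qed.
Lemma rpow_le_base e x y : 0 <= e -> 0 <= x <= y -> rpow x e <= rpow y e.
Proof.
  intros He [[Hx|Hx] Hxy].
  - rewrite !rpow_pos by lra. apply Rle_Rpower_l; lra.
  - subst. rewrite (rpow_le0 0) by lra. apply rpow_ge0.
Qed.

Lemma rpow_derive e x : 0 < e -> is_derive (fun t => rpow t (e+1)) x ((e+1) * rpow x e).
Proof.
  intros He.
  destruct (Rtotal_order x 0) as [Hx|[Hx|Hx]].
  - rewrite rpow_le0 by lra. rewrite Rmult_0_r.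
    apply is_derive_ext_loc with (f := fun _ => 0).
    + exists (mkposreal (-x) ltac:(lra)). intros t Ht.
      unfold ball in Ht; simpl in Ht; unfold AbsRing_ball, abs, minus, plus, opp in Ht; simpl in Ht.
      rewrite rpow_le0; auto. apply Rabs_def2 in Ht. lra.
    + apply is_derive_Reals, derivable_pt_lim_const.
  - subst. rewrite (rpow_le0 0) by lra. rewrite Rmult_0_r.
    apply is_derive_Reals. intros eps Heps.
    exists (mkposreal (Rpower eps (/e)) (Rpower_pos _ _)). intros h Hh0 Hh. simpl in Hh.
    rewrite Rplus_0_l, (rpow_le0 0) by lra.
    destruct (Rle_dec h 0) as [Hn|Hp].
    + rewrite rpow_le0 by auto. replace ((0 - 0) / h - 0) with 0 by (field; auto). rewrite Rabs_R0. auto.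
    + assert (Hp' : 0 < h) by lra.
      rewrite rpow_pos, Rpower_plus, Rpower_1 by auto.
      replace ((Rpower h e * h - 0) / h - 0) with (Rpower h e) by (field; lra).
      rewrite Rabs_pos_eq by (left; apply Rpower_pos).
      rewrite Rabs_pos_eq in Hh by lra.
      replace eps with (Rpower (Rpower eps (/e)) e).
      * apply Rlt_Rpower_l; auto.
      * rewrite Rpower_mult. rewrite Rinv_l by lra. apply Rpower_1; auto.
  - rewrite rpow_pos by auto.
    apply is_derive_ext_loc with (f := fun t => Rpower t (e+1)).
    + exists (mkposreal x Hx). intros t Ht.
      unfold ball in Ht; simpl in Ht; unfold AbsRing_ball, abs, minus, plus, opp in Ht; simpl in Ht.
      apply Rabs_def2 in Ht. rewrite rpow_pos; auto; lra.
    + apply is_derive_Reals. replace (Rpower x e) with (Rpower x (e+1-1)) by (f_equal; ring).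
      apply derivable_pt_lim_power; auto.
Qed.

Lemma rpow_cont e x : 1 < e -> continuous (fun t => rpow t e) x.
Proof.
  intros He. apply (ex_derive_continuous (K:=R_AbsRing) (V:=R_NormedModule)).
  exists ((e-1+1) * rpow x (e-1)).
  apply is_derive_ext with (f := fun t => rpow t (e-1+1)).
  - intros t. f_equal. ring.
  - apply rpow_derive. lra.
Qed.

Lemma int_pow_gen e a b : 1 < e ->
  is_RInt (fun t => rpow t e) a b (rpow b (e+1) / (e+1) - rpow a (e+1) / (e+1)).
Proof.
  intros He.
  replace (rpow b (e+1) / (e+1) - rpow a (e+1) / (e+1))
    with (minus ((fun t => / (e+1) * rpow t (e+1)) b) ((fun t => / (e+1) * rpow t (e+1)) a))
    by (unfold minus, plus, opp; simpl; field; lra).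
  apply (is_RInt_derive (V:=R_CompleteNormedModule) (fun t => / (e+1) * rpow t (e+1)) (fun t => rpow t e)).
  - intros x _. replace (rpow x e) with (/ (e+1) * ((e+1) * rpow x e)) by (field; lra).
    apply is_derive_scal. apply rpow_derive. lra.
  - intros x _. apply rpow_cont; auto.
Qed.

Lemma int_pow e c : (e = 0 \/ 1 < e) -> 0 < c ->
  is_RInt (fun t => rpow t e) 0 c (rpow c (e+1) / (e+1)).
Proof.
  intros [He|He] Hc.
  - subst. rewrite Rplus_0_l, rpow_pos, Rpower_1 by lra.
    apply is_RInt_ext with (f := fun _ => 1).
    + intros x Hx. rewrite Rmin_left, Rmax_right in Hx by lra.
      rewrite rpow_pos, Rpower_O; lra.
    + replace (c / 1) with (scal (c - 0) 1) by (unfold scal; simpl; unfold mult; simpl; field).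
      apply (is_RInt_const (V:=R_NormedModule)).
  - replace (rpow c (e+1) / (e+1)) with (rpow c (e+1) / (e+1) - rpow 0 (e+1) / (e+1)).
    + apply int_pow_gen; auto.
    + rewrite (rpow_le0 0) by lra. field. lra.
Qed.

Fixpoint q (beta : R) (j : nat) : R :=
  match j with O => 0 | S j' => 1 + beta * q beta j' end.
Fixpoint qf (beta : R) (j : nat) : R :=
  match j with O => 1 | S j' => qf beta j' * q beta (S j') end.

Lemma q_ge0 beta j : 0 <= beta -> 0 <= q beta j.
Proof. intros Hb; induction j; simpl; [lra|]. assert (0 <= beta * q beta j) by (apply Rmult_le_pos; auto). lra. Qed.
Lemma qS_ge1 beta j : 0 <= beta -> 1 <= q beta (S j).
Proof. intros Hb; simpl. assert (0 <= beta * q beta j) by (apply Rmult_le_pos; auto using q_ge0). lra. Qed.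
Lemma qf_pos beta j : 0 <= beta -> 0 < qf beta j.
Proof. intros Hb; induction j; simpl; [lra|]. apply Rmult_lt_0_compat; auto. pose proof (qS_ge1 beta j Hb). simpl in H. lra. Qed.

Lemma exp_cond beta j : 1 < beta -> beta * q beta j = 0 \/ 1 < beta * q beta j.
Proof.
  intros Hb. destruct j.
  - left. simpl. ring.
  - right. pose proof (qS_ge1 beta j ltac:(lra)). nra.
Qed.

Lemma rpow_2x e t : 0 <= t -> rpow (2*t) e = Rpower 2 e * rpow t e.
Proof. intros Ht. rewrite rpow_mult, rpow_pos by lra. auto. Qed.

Definition K beta := Rpower 2 (beta - 1).
Lemma K_pos beta : 0 < K beta.
Proof. apply Rpower_pos. Qed.

Lemma psi1_ge0 beta x : 0 <= psi1 beta x.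
Proof. unfold psi1. apply Rmult_le_pos; [left; apply Rpower_pos| apply rpow_ge0]. Qed.
Lemma psi1_pos beta x : 0 < x -> 0 < psi1 beta x.
Proof. intros Hx. unfold psi1. rewrite rpow_pos by auto. apply Rmult_lt_0_compat; apply Rpower_pos. Qed.

Lemma intA beta j c : 1 < beta -> 0 < c ->
  is_RInt (fun t => rpow (2*t) (beta * q beta j) / (2^j * qf beta j)) 0 c
    (Rpower 2 (beta * q beta j) * rpow c (q beta (S j)) / (2^j * qf beta (S j))).
Proof.
  intros Hb Hc.
  pose proof (qf_pos beta j ltac:(lra)).
  pose proof (qS_ge1 beta j ltac:(lra)).
  apply is_RInt_ext with (f := fun t => (Rpower 2 (beta * q beta j) / (2^j * qf beta j)) * rpow t (beta * q beta j)).
  - intros x Hx. rewrite Rmin_left, Rmax_right in Hx by lra.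
    rewrite rpow_2x by lra. change (Rpower 2 (beta * q beta j) / (2 ^ j * qf beta j) * rpow x (beta * q beta j) = Rpower 2 (beta * q beta j) * rpow x (beta * q beta j) / (2 ^ j * qf beta j)). field. split; [lra| apply pow_nonzero; lra].
  - replace (Rpower 2 (beta * q beta j) * rpow c (q beta (S j)) / (2^j * qf beta (S j)))
      with (scal (Rpower 2 (beta * q beta j) / (2^j * qf beta j)) (rpow c (beta * q beta j + 1) / (beta * q beta j + 1))).
    + apply (is_RInt_scal (V:=R_NormedModule)). apply int_pow; auto. apply exp_cond; auto.
    + unfold scal at 1; simpl; unfold mult; simpl.
      replace (beta * q beta j + 1) with (q beta (S j)) by (simpl; ring).
      change (1 + beta * q beta j) with (q beta (S j)). field. split; [|split]; try lra. apply pow_nonzero; lra.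
Qed.

Definition Afun beta j x := rpow (2*x) (beta * q beta j) / (2^j * qf beta j).

Lemma pow2_id beta j :
  Rpower 2 (beta * q beta j) * Rpower 2 ((beta - 1) * q beta (S j)) * 2 =
  Rpower 2 (beta * q beta (S j)).
Proof.
  rewrite <- (Rpower_1 2) at 3 by lra.
  rewrite <- !Rpower_plus. f_equal. simpl. ring.
Qed.

Lemma A_formula beta j x : 1 < beta -> 0 < x -> iter_in (psi1 beta) 0 j x = Afun beta j x.
Proof.
  intros Hb. revert x. induction j; intros x Hx.
  - unfold Afun. simpl. rewrite Rmult_0_r, rpow_pos, Rpower_O by lra. field.
  - simpl iter_in.
    pose proof (psi1_pos beta x Hx) as Hp.
    rewrite RInt_ext with (g := Afun beta j).
    2:{ intros t Ht. rewrite Rmin_left, Rmax_right in Ht by lra. apply IHj. lra. }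
    unfold Afun at 1.
    rewrite (is_RInt_unique _ _ _ _ (intA beta j (psi1 beta x) Hb Hp)).
    unfold Afun, psi1. fold (K beta).
    pose proof (K_pos beta).
    rewrite rpow_mult by (try lra; apply rpow_ge0).
    rewrite rpow_rpow by lra. rewrite (rpow_pos (K beta)) by lra.
    rewrite rpow_2x by lra. unfold K. rewrite Rpower_mult.
    rewrite <- (pow2_id beta j).
    pose proof (qf_pos beta (S j) ltac:(lra)).
    simpl pow. field. split; [lra|]. apply pow_nonzero; lra.
Qed.

Lemma shift (f : R -> R) a b : ex_RInt f (a - 1/2) (b - 1/2) ->
  ex_RInt (fun t => f (t - 1/2)) a b /\ RInt (fun t => f (t - 1/2)) a b = RInt f (a - 1/2) (b - 1/2).
Proof.
  intros H.
  assert (H' : ex_RInt f (1 * a + - (1/2)) (1 * b + - (1/2))).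
  { replace (1 * a + - (1/2)) with (a - 1/2) by ring. replace (1 * b + - (1/2)) with (b - 1/2) by ring. auto. }
  split.
  - apply ex_RInt_ext with (f := fun y => scal 1 (f (1 * y + - (1/2)))).
    + intros x _. unfold scal; simpl; unfold mult; simpl. rewrite Rmult_1_l. f_equal. ring.
    + apply (ex_RInt_comp_lin (V:=R_NormedModule)). auto.
  - rewrite (RInt_ext (V:=R_CompleteNormedModule) _ (fun y => scal 1 (f (1 * y + - (1/2))))).
    + rewrite (RInt_comp_lin (V:=R_CompleteNormedModule)) by auto. f_equal; ring.
    + intros x _. unfold scal; simpl; unfold mult; simpl. rewrite Rmult_1_l. f_equal. ring.
Qed.

Lemma RInt_mulc (g : R -> R) k a b : ex_RInt g a b ->
  ex_RInt (fun t => g t * k) a b /\ RInt (fun t => g t * k) a b = RInt g a b * k.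
Proof.
  intros H. split.
  - apply ex_RInt_ext with (f := fun t => scal k (g t)).
    + intros x _. unfold scal; simpl; unfold mult; simpl. ring.
    + apply (ex_RInt_scal (V:=R_NormedModule)). auto.
  - rewrite (RInt_ext (V:=R_CompleteNormedModule) _ (fun t => scal k (g t))).
    + rewrite (RInt_scal (V:=R_CompleteNormedModule)) by auto. unfold scal; simpl; unfold mult; simpl. ring.
    + intros x _. unfold scal; simpl; unfold mult; simpl. ring.
Qed.

Lemma RInt_sum (f : nat -> R -> R) a b n :
  (forall l, (l <= n)%nat -> ex_RInt (f l) a b) ->
  ex_RInt (fun t => sum_f_R0 (fun l => f l t) n) a b /\
  RInt (fun t => sum_f_R0 (fun l => f l t) n) a b = sum_f_R0 (fun l => RInt (f l) a b) n.
Proof.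
  induction n; intros H.
  - simpl. split; [apply H; lia|reflexivity].
  - destruct IHn as [IH1 IH2]. { intros l Hl; apply H; lia. }
    assert (Hn : ex_RInt (f (S n)) a b) by (apply H; lia).
    simpl. split.
    + apply (ex_RInt_plus (V:=R_NormedModule)) with (f := fun t => sum_f_R0 (fun l => f l t) n) (g := f (S n)); auto.
    + rewrite <- IH2.
      apply (RInt_plus (V:=R_CompleteNormedModule)) with (f := fun t => sum_f_R0 (fun l => f l t) n) (g := f (S n)); auto.
Qed.

Definition Aj beta j := iter_in (psi1 beta) 0 j.

Lemma A_int beta j c : 1 < beta -> 0 <= c ->
  ex_RInt (Aj beta j) 0 c /\
  RInt (Aj beta j) 0 c = Rpower 2 (beta * q beta j) * rpow c (q beta (S j)) / (2^j * qf beta (S j)).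
Proof.
  intros Hb [Hc|Hc].
  - assert (HI : is_RInt (Aj beta j) 0 c (Rpower 2 (beta * q beta j) * rpow c (q beta (S j)) / (2^j * qf beta (S j)))).
    { apply is_RInt_ext with (f := Afun beta j).
      - intros x Hx. rewrite Rmin_left, Rmax_right in Hx by lra. unfold Aj. rewrite A_formula; auto. lra.
      - apply intA; auto. }
    split; [exists (Rpower 2 (beta * q beta j) * rpow c (q beta (S j)) / (2^j * qf beta (S j))); auto|].
    apply is_RInt_unique; auto.
  - subst. split; [apply ex_RInt_point|]. rewrite RInt_point, (rpow_le0 0) by lra.
    unfold zero; simpl. pose proof (qf_pos beta (S j) ltac:(lra)). pose proof (qS_ge1 beta j ltac:(lra)). pose proof (qf_pos beta j ltac:(lra)). simpl in *. field. split; [lra|split;[lra|apply pow_nonzero; lra]].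
Qed.

Lemma Rpower_one y : Rpower 1 y = 1.
Proof. unfold Rpower. rewrite ln_1, Rmult_0_r. apply exp_0. Qed.
Lemma Rpower_half y : Rpower (1/2) y = / Rpower 2 y.
Proof.
  assert (H : Rpower 2 y * Rpower (1/2) y = 1).
  { rewrite Rpower_mult_distr by lra. replace (2 * (1/2)) with 1 by field. apply Rpower_one. }
  pose proof (Rpower_pos 2 y). field_simplify_eq; [|lra]. lra.
Qed.

Lemma a_val beta k : 1 < beta -> a_seq beta k = 1 / (2^k * qf beta k).
Proof.
  intros Hb. destruct k as [|j].
  - unfold a_seq, itint. simpl. field.
  - unfold a_seq, itint. fold (Aj beta j).
    destruct (A_int beta j (1/2) Hb ltac:(lra)) as [_ HH]. change (fun x : R => Aj beta j x) with (Aj beta j). rewrite HH.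
    rewrite rpow_pos, Rpower_half by lra.
    assert (E : Rpower 2 (q beta (S j)) = Rpower 2 (beta * q beta j) * 2).
    { rewrite <- (Rpower_1 2) at 3 by lra. rewrite <- Rpower_plus. f_equal. simpl. ring. }
    rewrite E. pose proof (Rpower_pos 2 (beta * q beta j)). pose proof (qf_pos beta (S j) ltac:(lra)).
    simpl pow. field. repeat split; try lra; apply pow_nonzero; lra.
Qed.

Lemma psi1_half beta : psi1 beta (1/2) = 1/2.
Proof.
  unfold psi1. rewrite rpow_pos, Rpower_half by lra.
  replace beta with ((beta - 1) + 1) at 2 by ring. rewrite Rpower_plus, Rpower_1 by lra.
  pose proof (Rpower_pos 2 (beta - 1)). field. lra.
Qed.

Lemma psi1_le beta x : 1 < beta -> 0 <= x <= 1/2 -> psi1 beta x <= 1/2.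
Proof.
  intros Hb Hx. rewrite <- (psi1_half beta). unfold psi1.
  apply Rmult_le_compat_l; [left; apply Rpower_pos|]. apply rpow_le_base; lra.
Qed.

Lemma I_eq_A beta j x : 1 < beta -> 0 <= x <= 1/2 ->
  iter_in (psi_beta beta) 0 j x = Aj beta j x.
Proof.
  intros Hb. revert x. induction j; intros x Hx; [reflexivity|].
  unfold Aj. simpl iter_in. unfold psi_beta. destruct (Rle_dec x (1/2)) as [_|]; [|lra].
  pose proof (psi1_le beta x Hb Hx). pose proof (psi1_ge0 beta x).
  apply RInt_ext. intros t Ht. rewrite Rmin_left, Rmax_right in Ht by lra.
  apply IHj. lra.
Qed.

Lemma B_eq_A beta j x : 1 < beta ->
  iter_in (psi2 beta) (1/2) j x = Aj beta j (x - 1/2).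
Proof.
  intros Hb. revert x. induction j; intros x; [reflexivity|].
  unfold Aj. simpl iter_in.
  rewrite (RInt_ext (V:=R_CompleteNormedModule) _ (fun t => Aj beta j (t - 1/2))) by (intros; apply IHj).
  pose proof (psi1_ge0 beta (x - 1/2)).
  destruct (shift (Aj beta j) (1/2) (psi2 beta x)) as [_ ->].
  - replace (1/2 - 1/2) with 0 by ring. replace (psi2 beta x - 1/2) with (psi1 beta (x - 1/2)) by (unfold psi2, psi1; ring).
    apply A_int; auto.
  - replace (1/2 - 1/2) with 0 by ring. replace (psi2 beta x - 1/2) with (psi1 beta (x - 1/2)) by (unfold psi2, psi1; ring).
    reflexivity.
Qed.

Lemma b_eq_a beta k : 1 < beta -> b_seq beta k = a_seq beta k.
Proof.
  intros Hb. destruct k as [|j]; [reflexivity|].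
  unfold b_seq, a_seq, itint.
  rewrite (RInt_ext (V:=R_CompleteNormedModule) _ (fun t => Aj beta j (t - 1/2))) by (intros; apply B_eq_A; auto).
  destruct (shift (Aj beta j) (1/2) 1) as [_ ->].
  - replace (1/2 - 1/2) with 0 by ring. replace (1 - 1/2) with (1/2) by field. apply A_int; lra.
  - replace (1/2 - 1/2) with 0 by ring. replace (1 - 1/2) with (1/2) by field. reflexivity.
Qed.

Definition Sfun beta j y := sum_f_R0 (fun l => Aj beta l y * a_seq beta (j - l)) j.

Lemma S_int beta j c : 1 < beta -> 0 <= c ->
  ex_RInt (Sfun beta j) 0 c /\
  RInt (Sfun beta j) 0 c = sum_f_R0 (fun l => RInt (Aj beta l) 0 c * a_seq beta (j - l)) j.
Proof.
  intros Hb Hc.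
  destruct (RInt_sum (fun l t => Aj beta l t * a_seq beta (j - l)) 0 c j) as [H1 H2].
  { intros l _. apply RInt_mulc. apply A_int; auto. }
  split; [exact H1|]. unfold Sfun. rewrite H2. apply sum_eq. intros l _.
  apply RInt_mulc. apply A_int; auto.
Qed.

Lemma step beta j c : 1 < beta -> 1/2 <= c <= 1 ->
  (forall x, 1/2 <= x <= 1 -> iter_in (psi_beta beta) 0 j x = Sfun beta j (x - 1/2)) ->
  RInt (iter_in (psi_beta beta) 0 j) 0 c =
  a_seq beta (S j) + sum_f_R0 (fun l => RInt (Aj beta l) 0 (c - 1/2) * a_seq beta (j - l)) j.
Proof.
  intros Hb Hc IH.
  destruct (A_int beta j (1/2) Hb ltac:(lra)) as [HA1 HA2].
  destruct (S_int beta j (c - 1/2) Hb ltac:(lra)) as [HS1 HS2].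
  destruct (shift (Sfun beta j) (1/2) c) as [HT1 HT2].
  { replace (1/2 - 1/2) with 0 by ring. auto. }
  assert (E1 : ex_RInt (iter_in (psi_beta beta) 0 j) 0 (1/2)).
  { apply ex_RInt_ext with (f := Aj beta j); auto.
    intros x Hx. rewrite Rmin_left, Rmax_right in Hx by lra. symmetry. apply I_eq_A; auto; lra. }
  assert (EXT2 : forall x, Rmin (1/2) c < x < Rmax (1/2) c -> Sfun beta j (x - 1/2) = iter_in (psi_beta beta) 0 j x).
  { intros x Hx. rewrite Rmin_left, Rmax_right in Hx by lra. symmetry. apply IH. lra. }
  assert (E2 : ex_RInt (iter_in (psi_beta beta) 0 j) (1/2) c).
  { apply ex_RInt_ext with (f := fun t => Sfun beta j (t - 1/2)); auto. }
  rewrite <- (RInt_Chasles (V:=R_CompleteNormedModule) _ 0 (1/2) c E1 E2).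
  unfold plus; simpl.
  rewrite (RInt_ext (V:=R_CompleteNormedModule) (iter_in (psi_beta beta) 0 j) (Aj beta j) 0 (1/2)).
  2:{ intros x Hx. rewrite Rmin_left, Rmax_right in Hx by lra. apply I_eq_A; auto; lra. }
  rewrite <- (RInt_ext (V:=R_CompleteNormedModule) _ _ (1/2) c EXT2).
  rewrite HT2. replace (1/2 - 1/2) with 0 by ring. rewrite HS2. reflexivity.
Qed.

Lemma psi_beta_ge beta x : 1/2 <= x -> psi_beta beta x = psi2 beta x.
Proof.
  intros Hx. unfold psi_beta. destruct (Rle_dec x (1/2)); auto.
  assert (x = 1/2) by lra. subst. rewrite psi1_half. unfold psi2.
  rewrite rpow_le0 by lra. ring.
Qed.

Lemma decomp beta j x : 1 < beta -> 1/2 <= x <= 1 ->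
  iter_in (psi_beta beta) 0 j x = Sfun beta j (x - 1/2).
Proof.
  intros Hb. revert x. induction j; intros x Hx.
  - unfold Sfun. simpl. unfold a_seq, itint, Aj. simpl. ring.
  - simpl iter_in. rewrite psi_beta_ge by lra.
    pose proof (psi1_ge0 beta (x - 1/2)). pose proof (psi1_le beta (x - 1/2) Hb ltac:(lra)).
    assert (Ec : psi2 beta x = psi1 beta (x - 1/2) + 1/2) by (unfold psi2, psi1; ring).
    change (RInt (fun t => iter_in (psi_beta beta) 0 j t) 0 (psi2 beta x)) with (RInt (iter_in (psi_beta beta) 0 j) 0 (psi2 beta x)).
    rewrite (step beta j (psi2 beta x) Hb ltac:(lra) IHj).
    replace (psi2 beta x - 1/2) with (psi1 beta (x - 1/2)) by lra.
    unfold Sfun. rewrite (decomp_sum _ (S j)) by lia. simpl pred.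
    replace (Aj beta 0 (x - 1/2)) with 1 by reflexivity. rewrite Rmult_1_l.
    f_equal.
Qed.

Lemma part1 beta n : 1 < beta -> (1 <= n)%nat ->
  d_seq beta n = sum_f_R0 (fun l => a_seq beta l * a_seq beta (n - l)) n.
Proof.
  intros Hb Hn. destruct n as [|m]; [lia|].
  unfold d_seq at 1. unfold itint.
  change (RInt (fun t => iter_in (psi_beta beta) 0 m t) 0 1) with (RInt (iter_in (psi_beta beta) 0 m) 0 1).
  rewrite (step beta m 1 Hb ltac:(lra) (fun x Hx => decomp beta m x Hb Hx)).
  rewrite (decomp_sum _ (S m)) by lia. simpl pred.
  replace (a_seq beta 0) with 1 by reflexivity. rewrite Rmult_1_l.
  f_equal. apply sum_eq. intros l _. replace (1 - 1/2) with (1/2) by field.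
  reflexivity.
Qed.

Lemma Laux s n : 1 <= s -> INR (n+1) * s ^ n <= 1 + INR n * s ^ (n+1).
Proof.
  intros Hs. induction n.
  - simpl. lra.
  - rewrite !Nat.add_1_r in *. rewrite !S_INR in *. simpl pow in *.
    set (t := s ^ n) in *.
    assert (0 <= t) by (apply pow_le; lra).
    assert (0 <= (INR n + 1) * t * (s - 1) ^ 2).
    { apply Rmult_le_pos; [apply Rmult_le_pos; auto|]. pose proof (pos_INR n); lra. apply pow2_ge_0. }
    nra.
Qed.

Lemma q_lb beta s i : 1 <= s -> beta = s^2 -> INR (S i) * s ^ i <= q beta (S i).
Proof.
  intros Hs Hb. induction i.
  - simpl. lra.
  - change (q beta (S (S i))) with (1 + beta * q beta (S i)).
    pose proof (Laux s (S i) Hs).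
    replace (S i + 1)%nat with (S (S i)) in H by lia.
    assert (s^2 * (INR (S i) * s ^ i) <= s^2 * q beta (S i)).
    { apply Rmult_le_compat_l; auto. apply pow2_ge_0. }
    subst beta. simpl pow in *. nra.
Qed.

Fixpoint T (k : nat) : nat := match k with O => O | S k' => (T k' + k')%nat end.

Lemma T_val k : INR (T k) = INR k * (INR k - 1) / 2.
Proof. induction k; simpl T; [simpl; field|]. rewrite plus_INR, IHk, S_INR. field. Qed.

Lemma qf_lb beta s k : 1 <= s -> beta = s^2 -> INR (Factorial.fact k) * s ^ (T k) <= qf beta k.
Proof.
  intros Hs Hb. induction k.
  - simpl. lra.
  - change (qf beta (S k)) with (qf beta k * q beta (S k)).
    simpl T. rewrite pow_add. change (Factorial.fact (S k)) with (S k * Factorial.fact k)%nat.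
    rewrite mult_INR.
    pose proof (q_lb beta s k Hs Hb).
    assert (0 <= INR (Factorial.fact k) * s ^ T k) by (apply Rmult_le_pos; [apply pos_INR|apply pow_le; lra]).
    assert (0 <= INR (S k) * s ^ k) by (apply Rmult_le_pos; [apply pos_INR|apply pow_le; lra]).
    replace (INR (S k) * INR (Factorial.fact k) * (s ^ T k * s ^ k)) with
      ((INR (Factorial.fact k) * s ^ T k) * (INR (S k) * s ^ k)) by ring.
    apply Rmult_le_compat; auto.
Qed.

Lemma sum_lt (u w : nat -> R) n : (forall l, (l <= n)%nat -> u l <= w l) -> u O < w O ->
  sum_f_R0 u n < sum_f_R0 w n.
Proof.
  intros H H0. induction n; simpl; auto.
  assert (u (S n) <= w (S n)) by (apply H; lia).
  assert (sum_f_R0 u n < sum_f_R0 w n) by (apply IHn; intros; apply H; lia). lra.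
Qed.

Lemma term_bound beta s n l : 1 < beta -> 1 <= s -> beta = s^2 -> (l <= n)%nat ->
  a_seq beta l * a_seq beta (n - l) <=
  / (2^n * INR (Factorial.fact l) * INR (Factorial.fact (n - l)) * s ^ (T l + T (n - l))).
Proof.
  intros Hb Hs Hbs Hl.
  rewrite !a_val by auto.
  pose proof (qf_lb beta s l Hs Hbs). pose proof (qf_lb beta s (n-l) Hs Hbs).
  pose proof (qf_pos beta l ltac:(lra)). pose proof (qf_pos beta (n-l) ltac:(lra)).
  assert (E : 2^n = 2^l * 2^(n-l)) by (rewrite <- pow_add; f_equal; lia).
  pose proof (pow_lt 2 l ltac:(lra)). pose proof (pow_lt 2 (n-l) ltac:(lra)).
  replace (1 / (2 ^ l * qf beta l) * (1 / (2 ^ (n - l) * qf beta (n - l))))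
    with (/ (2^n * (qf beta l * qf beta (n-l)))) by (rewrite E; field; lra).
  apply Rinv_le_contravar.
  - pose proof (pow_lt 2 n ltac:(lra)). pose proof (lt_0_INR _ (Factorial.lt_O_fact l)). pose proof (lt_0_INR _ (Factorial.lt_O_fact (n-l))). pose proof (pow_lt s (T l + T (n-l)) ltac:(lra)). repeat apply Rmult_lt_0_compat; auto.
  - rewrite pow_add.
    replace (2 ^ n * INR (Factorial.fact l) * INR (Factorial.fact (n - l)) * (s ^ T l * s ^ T (n - l)))
      with (2^n * ((INR (Factorial.fact l) * s ^ T l) * (INR (Factorial.fact (n - l)) * s ^ T (n - l)))) by ring.
    apply Rmult_le_compat_l; [left; apply pow_lt; lra|].
    apply Rmult_le_compat; auto; apply Rmult_le_pos; try apply pos_INR; apply pow_le; lra.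
Qed.

Lemma part2 beta n : 1 < beta -> (1 <= n)%nat ->
  sum_f_R0 (fun l => a_seq beta l * a_seq beta (n - l)) n <
  Rpower beta ((- (INR n)^2 / 2 + INR n) / 4) / INR (Factorial.fact n).
Proof.
  intros Hb Hn.
  set (s := Rpower beta (1/2)).
  assert (Hs : 1 < s).
  { rewrite <- (Rpower_O beta) by lra. apply Rpower_lt; lra. }
  assert (Hbs : beta = s^2).
  { rewrite <- Rpower_pow by lra. unfold s. rewrite Rpower_mult. simpl INR.
    replace (1/2 * (1+1)) with 1 by field. rewrite Rpower_1; lra. }
  set (M := Rpower s ((INR n ^2 - 2 * INR n) / 4)).
  assert (HM : 0 < M) by apply Rpower_pos.
  pose proof (lt_0_INR _ (Factorial.lt_O_fact n)) as Hf.
  assert (HR : Rpower beta ((- (INR n)^2 / 2 + INR n) / 4) / INR (Factorial.fact n) =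
               / M / INR (Factorial.fact n)).
  { f_equal. unfold M. rewrite <- Rpower_Ropp. unfold s. rewrite Rpower_mult. f_equal. field. }
  rewrite HR.
  set (w := fun l => / (2^n * INR (Factorial.fact l) * INR (Factorial.fact (n - l)) * M)).
  assert (Hsum : sum_f_R0 w n = / M / INR (Factorial.fact n)).
  { rewrite (sum_eq w (fun l => Binomial.C n l * / (2^n * M * INR (Factorial.fact n)))).
    - rewrite <- scal_sum.
      rewrite (sum_eq _ (fun i => Binomial.C n i * 1 ^ i * 1 ^ (n - i))).
      + rewrite <- binomial. replace (1+1) with 2 by ring.
        pose proof (pow_lt 2 n ltac:(lra)). field. lra.
      + intros i _. rewrite !pow1. ring.
    - intros l Hl. unfold w, Binomial.C.
      pose proof (lt_0_INR _ (Factorial.lt_O_fact l)). pose proof (lt_0_INR _ (Factorial.lt_O_fact (n - l))).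
      pose proof (pow_lt 2 n ltac:(lra)). field. lra. }
  rewrite <- Hsum. apply sum_lt.
  - intros l Hl. eapply Rle_trans; [apply (term_bound beta s n l Hb ltac:(lra) Hbs Hl)|].
    unfold w. apply Rinv_le_contravar.
    + pose proof (lt_0_INR _ (Factorial.lt_O_fact l)). pose proof (lt_0_INR _ (Factorial.lt_O_fact (n - l))).
      pose proof (pow_lt 2 n ltac:(lra)).
      repeat apply Rmult_lt_0_compat; auto.
    + apply Rmult_le_compat_l.
      * pose proof (lt_0_INR _ (Factorial.lt_O_fact l)). pose proof (lt_0_INR _ (Factorial.lt_O_fact (n - l))).
        pose proof (pow_lt 2 n ltac:(lra)). left. repeat apply Rmult_lt_0_compat; auto.
      * rewrite <- Rpower_pow by lra. unfold M. apply Rle_Rpower; [lra|].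
        rewrite plus_INR, !T_val, minus_INR by auto.
        assert (0 <= (2 * INR l - INR n)^2) by apply pow2_ge_0. nra.
  - eapply Rle_lt_trans; [apply (term_bound beta s n 0 Hb ltac:(lra) Hbs (Nat.le_0_l n))|].
    unfold w. apply Rinv_lt_contravar.
    + pose proof (lt_0_INR _ (Factorial.lt_O_fact (n - 0))).
      pose proof (pow_lt 2 n ltac:(lra)). simpl (Factorial.fact 0). simpl INR.
      repeat apply Rmult_lt_0_compat; auto; try lra. apply pow_lt; lra.
    + apply Rmult_lt_compat_l.
      * pose proof (lt_0_INR _ (Factorial.lt_O_fact (n - 0))).
        pose proof (pow_lt 2 n ltac:(lra)). simpl (Factorial.fact 0). simpl INR. nra.
      * rewrite <- Rpower_pow by lra. unfold M. apply Rpower_lt; [lra|].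
        rewrite plus_INR, !T_val. rewrite Nat.sub_0_r. simpl INR.
        assert (1 <= INR n) by (apply (le_INR 1); auto). nra.
Qed.

Theorem lemma4p6 (beta : R) (n : nat) :
  1 < beta -> (1 <= n)%nat ->
  d_seq beta n = sum_f_R0 (fun l => b_seq beta l * a_seq beta (n - l)) n /\
  d_seq beta n < Rpower beta ((- (INR n)^2 / 2 + INR n) / 4) / INR (Factorial.fact n).
Proof.
  intros Hb Hn.
  assert (E : sum_f_R0 (fun l => b_seq beta l * a_seq beta (n - l)) n =
              sum_f_R0 (fun l => a_seq beta l * a_seq beta (n - l)) n).
  { apply sum_eq. intros i _. rewrite b_eq_a; auto. }
  rewrite E, part1 by auto. split; [reflexivity|]. apply part2; auto.
Qed.
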